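(* Let $S=\{213,231,312,321\}$, let $t_n$ be the number of rooted labeled trees on $[n]$ avoiding $S$ (with $t_0=0$), and let $T(x)=\sum_{n\ge0}\frac{t_n}{n!}x^n$. Then $T$ satisfies the differential equation $T'=T+e^{T}$ with initial condition $T(0)=0$.
   Context: A rooted labeled tree on $[n]$ is an unordered tree on $n$ vertices with a distinguished root and distinct labels from $[n]$. An instance of a pattern (permutation) $\pi$ of $[k]$ is a sequence of vertices $v_1,\dots,v_k$ with $v_i$ a strict ancestor of $v_{i+1}$ whose labels are in the same relative order as $\pi$; a tree avoids $S$ if it contains no instance of any pattern in $S$. *)

(* Defs.v *)
From mathcomp Require Import all_boot all_order all_algebra.
Set Implicit Arguments. Unset Strict Implicit. Unset Printing Implicit Defensive.
Import GRing.Theory Num.Theory.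

(* Vertices are 'I_n = {0,...,n-1}; the label of a vertex is its value
   (order-isomorphic to labelling by [n] = {1,...,n}).
   A rooted tree is encoded by its parent function p : vertex -> option vertex,
   p v = None iff v is the root. *)

Definition pstep (n : nat) (p : {ffun 'I_n -> option 'I_n}) (x : option 'I_n)
  : option 'I_n := if x is Some y then p y else None.

Definition is_rooted_tree (n : nat) (p : {ffun 'I_n -> option 'I_n}) : bool :=
  (#|[pred x | p x == None]| == 1) &&
  [forall v : 'I_n, exists k : 'I_n.+1, iter k (pstep p) (Some v) == None].

Definition strict_anc (n : nat) (p : {ffun 'I_n -> option 'I_n}) (u v : 'I_n)
  : bool :=
  [exists k : 'I_n.+1, (0 < k)%N && (iter k (pstep p) (Some v) == Some u)].

Definition contains (n : nat) (p : {ffun 'I_n -> option 'I_n}) (pi : seq nat)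
  : bool :=
  [exists s : (size pi).-tuple 'I_n,
     sorted (strict_anc p) s &&
     [forall i : 'I_(size pi), forall j : 'I_(size pi),
        ((val (tnth s i) < val (tnth s j))%N ==
         (nth 0 pi i < nth 0 pi j)%N)]].

Definition avoids (n : nat) (p : {ffun 'I_n -> option 'I_n}) (S : seq (seq nat))
  : bool := all (fun pi => ~~ contains p pi) S.

Definition S5p12 : seq (seq nat) :=
  [:: [:: 2; 1; 3]; [:: 2; 3; 1]; [:: 3; 1; 2]; [:: 3; 2; 1]].

(* t_n = number of rooted labeled trees on [n] avoiding S (t_0 = 0 since a
   tree needs a root). *)
Definition tcount (S : seq (seq nat)) (n : nat) : nat :=
  #|[pred p : {ffun 'I_n -> option 'I_n} | is_rooted_tree p && avoids p S]|.

Local Open Scope ring_scope.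
Definition fps := nat -> rat.
Definition fps_one : fps := fun n => if n is 0 then 1 else 0.
Definition fps_mul (a b : fps) : fps :=
  fun n => \sum_(i < n.+1) a i * b (n - i)%N.
Definition fps_pow (a : fps) (k : nat) : fps := iter k (fps_mul a) fps_one.
Definition fps_deriv (a : fps) : fps := fun n => (n.+1)%:R * a n.+1.
(* exp(a) = sum_k a^k / k!, for a series with zero constant term (then a^k
   has order >= k, so only k <= n contribute to the n-th coefficient). *)
Definition fps_exp (a : fps) : fps :=
  fun n => \sum_(k < n.+1) fps_pow a k n / (k`!)%:R.
Definition egf (t : nat -> nat) : fps := fun n => (t n)%:R / (n`!)%:R.

(* Main.v *)
Require Import Defs.
From mathcomp Require Import all_boot all_order all_algebra.
From mathcomp Require Import zify.
Set Implicit Arguments. Unset Strict Implicit. Unset Printing Implicit Defensive.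
Lemma card_bij (T U : finType) (A : {pred T}) (B : {pred U}) (f : T -> U) (g : U -> T) :
  (forall x, x \in A -> f x \in B) -> (forall y, y \in B -> g y \in A) ->
  (forall x, x \in A -> g (f x) = x) -> (forall y, y \in B -> f (g y) = y) ->
  #|A| = #|B|.
Proof.
move=> fAB gBA gf fg.
have H1 : forall (T U : finType) (A : {pred T}) (B : {pred U}) (f : T -> U) (g : U -> T),
  (forall x, x \in A -> f x \in B) -> (forall x, x \in A -> g (f x) = x) -> #|A| <= #|B|.
  move=> T' U' A' B' f' g' fAB' gf'.
  rewrite -(@card_in_imset _ _ f' A'); last first.
    by move=> x y Hx Hy E; rewrite -(gf' x Hx) -(gf' y Hy) E.
  apply: subset_leq_card; apply/subsetP => y /imsetP [x Hx ->]; exact: fAB'.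
by apply/eqP; rewrite eqn_leq (H1 _ _ _ _ f g) // (H1 _ _ _ _ g f).
Qed.

Section Comb.
Variable N : nat.
Local Notation V := 'I_N.
Local Notation PF := {ffun V -> option V}.
Implicit Types (p q : PF) (X Y : {set V}).

Definition reach p v := exists k, iter k (pstep p) (Some v) = None.
Definition anc p u v := exists2 k, (0 < k)%N & iter k (pstep p) (Some v) = Some u.

Lemma iter_None p k : iter k (pstep p) None = None.
Proof. by elim: k => //= k ->. Qed.

Lemma iterSome p k v : iter k.+1 (pstep p) (Some v) = iter k (pstep p) (p v).
Proof. by rewrite iterSr. Qed.

Lemma reach_bound p v : reach p v ->
  exists2 m, (m <= N)%N & iter m (pstep p) (Some v) = None.
Proof.
move=> ex.
have ex' : exists k, iter k (pstep p) (Some v) == None by case: ex => k H; exists k; apply/eqP.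
case: (ex_minnP ex') => m /eqP Hm Hmin.
exists m => //.
pose g (j : 'I_m) : V := odflt v (iter j (pstep p) (Some v)).
have Hg : forall j : 'I_m, iter j (pstep p) (Some v) = Some (g j).
  move=> j; rewrite /g; case E: (iter j _ _) => [w|] //=.
  by have := Hmin j; rewrite E eqxx => /(_ isT); rewrite leqNgt ltn_ord.
have ginj : injective g.
  move=> i j Eij; apply/eqP; rewrite -val_eqE; apply/negPn/negP => ne.
  wlog lt : i j Eij ne / (i < j)%N.
    move=> W; case: (ltngtP i j) => [l|l|e]; first exact: (W i j).
    - by apply: (W j i) => //; rewrite eq_sym.
    - by case/negP: ne; apply/eqP.
  have E2 : iter (m - j + i) (pstep p) (Some v) = None.
    by rewrite iterD (Hg i) Eij -(Hg j) -iterD subnK ?Hm // ltnW.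
  have := Hmin (m - j + i); rewrite E2 eqxx => /(_ isT).
  have := ltn_ord j; lia.
by have := leq_card g ginj; rewrite !card_ord.
Qed.

Lemma iter_after p v m k : iter m (pstep p) (Some v) = None -> (m <= k)%N ->
  iter k (pstep p) (Some v) = None.
Proof. by move=> H /subnK <-; rewrite iterD H iter_None. Qed.

Lemma reachbP p v : reflect (reach p v)
  [exists k : 'I_N.+1, iter k (pstep p) (Some v) == None].
Proof.
apply: (iffP existsP) => [[k /eqP H]|H]; first by exists k.
case: (reach_bound H) => m Hm E; exists (Ordinal (n:=N.+1) (m:=m) Hm); exact/eqP.
Qed.

Lemma strict_ancP p u v : reach p v -> reflect (anc p u v) (strict_anc p u v).
Proof.
move=> R; apply: (iffP existsP) => [[k /andP[k0 /eqP H]]|[k k0 H]]; first by exists k.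
case: (reach_bound R) => m Hm E.
have km : (k < m)%N.
  rewrite ltnNge; apply/negP => mk; by rewrite (iter_after E mk) in H.
exists (Ordinal (n:=N.+1) (m:=k) (ltnW (leq_trans km Hm))); rewrite /= k0; exact/eqP.
Qed.

Lemma prune_iter p q : (forall w, q w = p w \/ q w = None) ->
  forall k x, iter k (pstep q) x = None \/ iter k (pstep q) x = iter k (pstep p) x.
Proof.
move=> H; elim=> [|k IH] x /=; first by right.
case: (IH x) => ->; first by left.
case: (iter k (pstep p) x) => [w|] /=; last by left.
by case: (H w) => ->; [right|left].
Qed.

Lemma prune_reach p q v : (forall w, q w = p w \/ q w = None) -> reach p v -> reach q v.
Proof.
move=> H [k E]; exists k; case: (prune_iter H k (Some v)) => // ->; exact: E.
Qed.

Lemma prune_anc p q u v : (forall w, q w = p w \/ q w = None) -> anc q u v -> anc p u v.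
Proof.
move=> H [k k0 E]; exists k => //; case: (prune_iter H k (Some v)); by rewrite E.
Qed.

Lemma agree_iter p q (A : pred V) : (forall w, A w -> p w = q w) ->
  (forall w u, A w -> q w = Some u -> A u) ->
  forall k v, A v -> iter k (pstep p) (Some v) = iter k (pstep q) (Some v).
Proof.
move=> Hpq Hc; elim=> [//|k IH] v Av.
rewrite !iterSome Hpq //; case E: (q v) => [u|]; last by rewrite !iter_None.
by apply: IH; exact: Hc E.
Qed.

Lemma closed_iter q (A : pred V) : (forall w u, A w -> q w = Some u -> A u) ->
  forall k v u, A v -> iter k (pstep q) (Some v) = Some u -> A u.
Proof.
move=> Hc; elim=> [|k IH] v u Av /=; first by case=> <-.
rewrite -/(iter k.+1 _ _) iterSome; case E: (q v) => [w|]; last by rewrite iter_None.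
by apply: IH; exact: Hc E.
Qed.

Lemma anc_closed q (A : pred V) u v : (forall w u, A w -> q w = Some u -> A u) ->
  A v -> anc q u v -> A u.
Proof. by move=> Hc Av [k _ E]; exact: closed_iter E. Qed.

Lemma agree_anc p q (A : pred V) u v : (forall w, A w -> p w = q w) ->
  (forall w u, A w -> q w = Some u -> A u) -> A v ->
  anc p u v <-> anc q u v.
Proof.
move=> H1 H2 Av; split => -[k k0 E]; exists k => //;
  by rewrite -E (agree_iter H1 H2 k Av).
Qed.

Lemma agree_reach p q (A : pred V) v : (forall w, A w -> p w = q w) ->
  (forall w u, A w -> q w = Some u -> A u) -> A v ->
  reach p v <-> reach q v.
Proof.
move=> H1 H2 Av; split => -[k E]; exists k;
  by rewrite -E (agree_iter H1 H2 k Av).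
Qed.

Lemma anc_parent p u v : anc p u v -> exists2 w, p v = Some w & (u = w \/ anc p u w).
Proof.
case=> -[//|k] _; rewrite iterSome; case: (p v) => [w|]; last by rewrite iter_None.
case: k => [|k] /= E; exists w => //; first by left; case: E.
by right; exists k.+1.
Qed.

Lemma anc_nonroot p u v : anc p u v -> p v != None.
Proof. by case/anc_parent => w ->. Qed.

Lemma anc1 p u v : p v = Some u -> anc p u v.
Proof. by move=> E; exists 1%N. Qed.

Lemma anc_trans p a b c : anc p a b -> anc p b c -> anc p a c.
Proof.
move=> [k k0 E1] [j j0 E2]; exists (k + j)%N; first by rewrite addn_gt0 k0.
by rewrite iterD E2.
Qed.

Lemma anc_step p u v w : p v = Some w -> anc p u w -> anc p u v.
Proof. by move=> E H; exact: anc_trans H (anc1 E). Qed.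

Lemma no_cycle p v : reach p v -> ~ anc p v v.
Proof.
move=> [m Em] [k k0 Ek].
have H : forall j, iter (k * j) (pstep p) (Some v) = Some v.
  elim=> [|j IH]; first by rewrite muln0.
  by rewrite mulnS iterD IH Ek.
have := H m; rewrite (iter_after Em) //.
by rewrite leq_pmull.
Qed.

Lemma last_root p v : reach p v -> exists2 w, (w = v \/ anc p w v) & p w = None.
Proof.
case=> k; elim: k v => [//|k IH] v; rewrite iterSome.
case E: (p v) => [u|] H; last by exists v => //; left.
case: (IH u H) => w Hw Pw; exists w => //; right.
case: Hw => [->|]; first exact: anc1.
exact: anc_step.
Qed.


Lemma anc_sa p u v : reach p v -> anc p u v -> strict_anc p u v.
Proof. by move=> R; move/(strict_ancP u R). Qed.

Lemma sa_anc p u v : strict_anc p u v -> anc p u v.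
Proof. by case/existsP => k /andP[k0 /eqP E]; exists k. Qed.

Definition closedb X p := [forall v, if v \in X then (if p v is Some u then u \in X else true) else p v == None].
Definition reachall p := [forall v : V, [exists k : 'I_N.+1, iter k (pstep p) (Some v) == None]].
Definition forest X p := closedb X p && reachall p.
Definition roots X p := [pred v | (v \in X) && (p v == None)].
Definition tree X p := forest X p && (#|roots X p| == 1%N).
Definition avoid p := [forall a : V, forall b : V, forall c : V,
  strict_anc p a b ==> strict_anc p b c ==> ((a < b)%N && (a < c)%N)].
Definition Fcnt X := #|[pred p : PF | forest X p && avoid p]|.
Definition Tcnt X := #|[pred p : PF | tree X p && avoid p]|.

Definition closedp X p := (forall v, v \notin X -> p v = None) /\
  (forall v u, v \in X -> p v = Some u -> u \in X).
Definition avoidp p := forall a b c, anc p a b -> anc p b c -> (a < b)%N /\ (a < c)%N.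

Lemma closedbP X p : reflect (closedp X p) (closedb X p).
Proof.
apply: (iffP forallP) => [H|[H1 H2] v].
  split=> [v vX|v u vX E]; have := H v; first by rewrite (negbTE vX) => /eqP.
  by rewrite vX E.
case: ifP => vX; last by rewrite H1 ?vX.
by case E: (p v) => [u|] //; exact: H2 E.
Qed.

Lemma reachallP p : reflect (forall v, reach p v) (reachall p).
Proof.
apply: (iffP forallP) => H v; first by apply/reachbP.
exact/reachbP.
Qed.

Lemma avoidP p : (forall v, reach p v) -> reflect (avoidp p) (avoid p).
Proof.
move=> R; apply: (iffP forallP) => [H a b c Hab Hbc|H a].
  have := H a => /forallP/(_ b)/forallP/(_ c).
  by rewrite (anc_sa (R b) Hab) (anc_sa (R c) Hbc) => /andP.
apply/forallP => b; apply/forallP => c; apply/implyP => /sa_anc Hab.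
apply/implyP => /sa_anc Hbc; apply/andP; exact: H Hab Hbc.
Qed.

Lemma forestP X p : forest X p -> closedp X p /\ (forall v, reach p v).
Proof. by case/andP => /closedbP H /reachallP. Qed.

Lemma forestI X p : closedp X p -> (forall v, reach p v) -> forest X p.
Proof. by move=> H1 H2; apply/andP; split; [apply/closedbP|apply/reachallP]. Qed.

Lemma closed_any X p : closedp X p -> forall w u, p w = Some u -> u \in X /\ w \in X.
Proof.
move=> [H1 H2] w u E; case: (boolP (w \in X)) => wX; first by split=> //; exact: H2 E.
by rewrite H1 in E.
Qed.

Lemma prune_avoid p q : (forall w, q w = p w \/ q w = None) -> avoidp p -> avoidp q.
Proof. by move=> H A a b c Hab Hbc; apply: A; apply: prune_anc H _. Qed.

Lemma roots_uniq X p u w : (#|roots X p| == 1%N) -> u \in X -> p u = None ->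
  w \in X -> p w = None -> u = w.
Proof.
case/card1P => x Hx uX pu wX pw.
have := Hx u; have := Hx w; rewrite !inE uX wX pu pw /= => /esym/eqP -> /esym/eqP ->.
done.
Qed.

Section MinFacts.
Variables (X : {set V}) (mu : V).
Hypothesis muX : mu \in X.
Hypothesis mumin : forall v, v \in X -> (mu <= v)%N.

Lemma minroot p r : closedp X p -> avoidp p -> p mu = Some r -> p r = None.
Proof.
move=> C A E; case E2: (p r) => [s|] //.
have [_ H] := A s r mu (anc1 E2) (anc1 E).
have [sX _] := closed_any C E2.
by have := mumin sX; lia.
Qed.

Lemma nochild p r v : closedp X p -> avoidp p -> p mu = Some r -> p v <> Some mu.
Proof.
move=> C A E E2.
have [H _] := A r mu v (anc1 E) (anc1 E2).
have [rX _] := closed_any C E.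
by have := mumin rX; lia.
Qed.
End MinFacts.

Lemma glue_iter p' q (mu : V) : (forall w, q w = p' w \/ p' w = Some mu) -> p' mu = None ->
  forall k x, [\/ iter k (pstep q) x = iter k (pstep p') x,
                  iter k (pstep p') x = Some mu | iter k (pstep p') x = None].
Proof.
move=> H Hmu; elim=> [|k IH] x; first by apply: Or31.
rewrite !iterS; case: (IH x) => [->|->|->] /=; last 2 first.
- by apply: Or33.
- by apply: Or33.
case: (iter k (pstep p') x) => [w|] /=; last by apply: Or31.
by case: (H w) => ->; [apply: Or31|apply: Or32].
Qed.

Lemma glue_anc p' q (mu : V) a b : (forall w, q w = p' w \/ p' w = Some mu) -> p' mu = None ->
  anc p' a b -> anc q a b \/ a = mu.
Proof.
move=> H Hmu [k k0 E]; case: (glue_iter H Hmu k (Some b)); rewrite E.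
- by move=> E2; left; exists k.
- by case=> ->; right.
- by [].
Qed.

Lemma glue_reach p' q (mu : V) v : (forall w, q w = p' w \/ p' w = Some mu) -> p' mu = None ->
  reach q v -> reach p' v.
Proof.
move=> H Hmu [k E]; case: (glue_iter H Hmu k (Some v)) => E2.
- by exists k; rewrite -E2.
- by exists k.+1; rewrite iterS E2 /= Hmu.
- by exists k.
Qed.

Section Rec1.
Variables (X : {set V}) (mu : V).
Hypothesis muX : mu \in X.
Hypothesis mumin : forall v, v \in X -> (mu <= v)%N.
Local Notation X' := (X :\ mu).

Definition cut p : PF := [ffun v => if p v == Some mu then None else p v].
Definition glue q : PF := [ffun v => if (v \in X') && (q v == None) then Some mu else q v].

Lemma cut_prune p w : cut p w = p w \/ cut p w = None.
Proof. by rewrite ffunE; case: ifP; [right|left]. Qed.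

Lemma cut_in p : tree X p -> avoid p -> p mu = None ->
  forest X' (cut p) && avoid (cut p).
Proof.
case/andP => /forestP [[C1 C2] R] _ /(avoidP R) A pmu.
have R' : forall v, reach (cut p) v by move=> v; apply: prune_reach (R v); exact: cut_prune.
apply/andP; split; last by apply/avoidP => //; apply: prune_avoid A; exact: cut_prune.
apply: forestI R'; split.
  move=> v; rewrite !inE negb_and negbK ffunE; case/orP => [/eqP E|vX]; first by rewrite E pmu.
  by rewrite C1 // if_same.
move=> v u; rewrite !inE ffunE => /andP[_ vX]; case: ifP => // /negbT ne E.
rewrite (C2 v u vX E) andbT; apply: contraNneq ne => <-; exact/eqP.
Qed.

Lemma glue_mu q : forest X' q -> glue q mu = None.
Proof.
case/forestP => -[C1 _] _; rewrite ffunE !inE eqxx /= C1 //.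
by rewrite !inE eqxx.
Qed.

Lemma glue_rel q : forest X' q -> forall w, q w = glue q w \/ glue q w = Some mu.
Proof.
move=> _ w; rewrite ffunE; case: ifP => _; [right|left] => //.
Qed.

Lemma glue_in q : forest X' q -> avoid q ->
  [&& tree X (glue q), avoid (glue q) & glue q mu == None].
Proof.
move=> F; have gmu := glue_mu F; have grel := glue_rel F.
case/forestP: F => [[C1 C2] R] /(avoidP R) A.
have R' : forall v, reach (glue q) v by move=> v; apply: glue_reach grel gmu (R v).
have Cg : closedp X (glue q).
  split.
    move=> v vX; have vX' : v \notin X' by rewrite !inE (negbTE vX) andbF.
    by rewrite ffunE (negbTE vX') /= C1.
  move=> v u vX; rewrite ffunE; case: ifP => [_ [<-] //| _ E].
  have [uX' _] := closed_any (conj C1 C2) E; move: uX'; rewrite !inE; by case/andP.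
rewrite gmu eqxx andbT; apply/andP; split.
  apply/andP; split; first exact: forestI.
  apply/card1P; exists mu => v; rewrite !inE.
  case: (eqVneq v mu) => [->|vmu] /=; first by rewrite muX gmu.
  rewrite ffunE !inE vmu /=; case: (boolP (v \in X)) => //= vX.
  by case: (q v).
apply/avoidP => // a b c Hab Hbc.
have ancX : forall x y, anc (glue q) x y -> y \in X /\ y != mu.
  move=> x y /anc_nonroot; case: (eqVneq y mu) => [->|ym]; first by rewrite gmu.
  case: (boolP (y \in X)) => // yX; by rewrite (proj1 Cg y yX).
have nomu : forall x, ~ anc (glue q) x mu by move=> x /anc_nonroot; rewrite gmu.
have [bX bmu] := ancX _ _ Hab; have [cX cmu] := ancX _ _ Hbc.
case: (glue_anc grel gmu Hab) => [Hab'|amu].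
  case: (glue_anc grel gmu Hbc) => [Hbc'|bmu']; last by rewrite bmu' eqxx in bmu.
  exact: A Hab' Hbc'.
subst a; have := mumin bX; have := mumin cX.
move: bmu cmu; rewrite -!val_eqE /=; lia.
Qed.

Lemma cut_glue q : forest X' q -> cut (glue q) = q.
Proof.
case/forestP => [[C1 C2] _]; apply/ffunP => v; rewrite !ffunE.
case H: ((v \in X') && (q v == None)).
  by move/andP: H => [_ /eqP ->]; rewrite eqxx.
case: eqP => // E.
case: (boolP (v \in X')) => vX; first by have := C2 _ _ vX E; rewrite !inE eqxx.
by rewrite C1 in E.
Qed.

Lemma glue_cut p : tree X p -> p mu = None -> glue (cut p) = p.
Proof.
case/andP => /forestP [[C1 C2] R] Hr pmu; apply/ffunP => v; rewrite !ffunE.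
case: (eqVneq (p v) (Some mu)) => [E|ne] /=.
  have [_ vX] := closed_any (conj C1 C2) E.
  have vmu : v != mu by apply/eqP => vm; rewrite vm pmu in E.
  by rewrite !inE vmu vX /= E.
case: ifP => // /andP[]; rewrite !inE => /andP[vmu vX] /eqP pv.
by have := roots_uniq Hr vX pv muX pmu; move/eqP: vmu.
Qed.

Definition del p : PF := [ffun v => if v == mu then None else p v].
Definition rt q : V := odflt mu [pick v | (v \in X') && (q v == None)].
Definition add q : PF := [ffun v => if v == mu then Some (rt q) else q v].

Lemma rt_spec q : tree X' q -> rt q \in X' /\ q (rt q) = None.
Proof.
case/andP => _ H; rewrite /rt; case: pickP => [x /andP[H1 /eqP H2] //|H0].
case/card1P: H => x Hx; have := Hx x; rewrite [x \in roots _ _]inE /=.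
by have := H0 x => /= ->; rewrite inE eqxx.
Qed.

Lemma del_prune p w : del p w = p w \/ del p w = None.
Proof. by rewrite ffunE; case: ifP; [right|left]. Qed.

Lemma del_in p : tree X p -> avoid p -> p mu != None -> tree X' (del p) && avoid (del p).
Proof.
case/andP => /forestP [[C1 C2] R] Hr /(avoidP R) A; case E: (p mu) => [r|] // _.
have R' : forall v, reach (del p) v by move=> v; apply: prune_reach (R v); exact: del_prune.
have nc := nochild muX mumin (conj C1 C2) A E.
apply/andP; split; last by apply/avoidP => //; apply: prune_avoid A; exact: del_prune.
apply/andP; split.
  apply: forestI R'; split.
    move=> v; rewrite !inE negb_and negbK ffunE; case/orP => [->//|vX].
    by rewrite C1 // if_same.
  move=> v u; rewrite !inE ffunE => /andP[vmu vX]; rewrite (negbTE vmu) => E2.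
  rewrite (C2 v u vX E2) andbT; apply/eqP => um; apply: (nc v); by rewrite E2 um.
rewrite -(eqP Hr); apply/eqP/eq_card => v; rewrite !inE ffunE.
by case: (eqVneq v mu) => [->|vmu]; first by rewrite eqxx E /= andbF.
Qed.

Lemma add_agree q : tree X' q ->
  forall k v, v != mu -> iter k (pstep (add q)) (Some v) = iter k (pstep q) (Some v).
Proof.
case/andP => /forestP [[C1 C2] R] _ k v vmu.
apply: (@agree_iter _ _ (fun w => w != mu)) => //.
  by move=> w wmu; rewrite ffunE (negbTE wmu).
move=> w u _ E; have [uX _] := closed_any (conj C1 C2) E.
by move: uX; rewrite !inE => /andP[].
Qed.

Lemma add_in q : tree X' q -> avoid q ->
  [&& tree X (add q), avoid (add q) & add q mu != None].
Proof.
move=> T; have [rX rN] := rt_spec T; have ag := add_agree T.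
case/andP: (T) => /forestP [[C1 C2] R] Hr /(avoidP R) A.
have rmu : rt q != mu by move: rX; rewrite !inE => /andP[].
have amu : add q mu = Some (rt q) by rewrite ffunE eqxx.
have ar : add q (rt q) = None by rewrite ffunE (negbTE rmu).
have R' : forall v, reach (add q) v.
  move=> v; case: (eqVneq v mu) => [->|vmu].
    by exists 2; rewrite /= amu /= ar.
  by case: (R v) => k E; exists k; rewrite ag.
have ancq : forall x y, y != mu -> anc (add q) x y -> anc q x y.
  by move=> x y ym [k k0 E]; exists k => //; rewrite -ag.
have ancmu : forall x, anc (add q) x mu -> x = rt q.
  move=> x /anc_parent [w]; rewrite amu => -[<-] [//|/anc_nonroot].
  by rewrite ar.
rewrite amu andbT; apply/andP; split.
  apply/andP; split.
    apply: forestI R'; split.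
      move=> v vX; have vmu : v != mu by apply: contraNneq vX => ->.
      by rewrite ffunE (negbTE vmu) C1 // !inE negb_and vX orbT.
    move=> v u vX; rewrite ffunE; case: ifP => [_ [<-]|vmu E].
      by move: rX; rewrite !inE => /andP[].
    have vX' : v \in X' by rewrite !inE vmu vX.
    by have := C2 _ _ vX' E; rewrite !inE => /andP[].
  rewrite -(eqP Hr); apply/eqP/eq_card => v; rewrite !inE ffunE.
  by case: (eqVneq v mu) => [->|vmu] //=; rewrite andbF.
apply/(avoidP R') => a b c Hab Hbc.
case: (eqVneq c mu) => [cmu|cmu].
  subst c; have := ancmu _ Hbc => bE; subst b.
  by move: (anc_nonroot Hab); rewrite ar.
have Hbc' := ancq _ _ cmu Hbc.
have bmu : b != mu.
  apply: (@anc_closed q (fun w => w != mu) b c) => // w u _ E.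
  have [uX _] := closed_any (conj C1 C2) E; by move: uX; rewrite !inE => /andP[].
exact: A (ancq _ _ bmu Hab) Hbc'.
Qed.

Lemma del_add q : tree X' q -> del (add q) = q.
Proof.
case/andP => /forestP [[C1 C2] _] _; apply/ffunP => v; rewrite !ffunE.
by case: (eqVneq v mu) => [->|//]; rewrite C1 // !inE eqxx.
Qed.

Lemma add_del p : tree X p -> avoid p -> p mu != None -> add (del p) = p.
Proof.
move=> T Av pmu; have /andP[Td _] := del_in T Av pmu.
have [rX rN] := rt_spec Td.
case/andP: T => /forestP [[C1 C2] R] Hr; move/(avoidP R): Av => A.
apply/ffunP => v; rewrite !ffunE; case: (eqVneq v mu) => [->|//].
case E: (p mu) pmu => [r|] // _; congr Some.
have rr := minroot muX mumin (conj C1 C2) A E.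
have [rX0 _] := closed_any (conj C1 C2) E.
move: rN; rewrite ffunE; case: ifP => [/eqP rm|_ rN].
  by move: rX; rewrite rm !inE eqxx.
move: rX; rewrite !inE => /andP[_ rX1].
exact: roots_uniq Hr rX1 rN rX0 rr.
Qed.

Lemma rec1 : Tcnt X = (Fcnt X' + Tcnt X')%N.
Proof.
rewrite /Tcnt -(cardID [pred p : PF | p mu == None]).
congr addn.
  apply: (@card_bij _ _ _ _ cut glue).
  - by move=> p; rewrite !inE => /andP[/andP[T Av] /eqP pm]; exact: cut_in.
  - by move=> q; rewrite !inE => /andP[F Av]; case/and3P: (glue_in F Av) => -> -> ->.
  - by move=> p; rewrite !inE => /andP[/andP[T Av] /eqP pm]; rewrite glue_cut.
  - by move=> q; rewrite !inE => /andP[F Av]; rewrite cut_glue.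
apply: (@card_bij _ _ _ _ del add).
- by move=> p; rewrite !inE => /andP[pm /andP[T Av]]; exact: del_in.
- by move=> q; rewrite !inE => /andP[F Av]; case/and3P: (add_in F Av) => -> -> ->.
- by move=> p; rewrite !inE => /andP[pm /andP[T Av]]; rewrite add_del.
- by move=> q; rewrite !inE => /andP[F Av]; rewrite del_add.
Qed.
End Rec1.

Definition rho (mu : V) p := if p mu is Some r then r else mu.

Lemma rho_spec X mu p : mu \in X -> (forall v, v \in X -> (mu <= v)%N) ->
  closedp X p -> avoidp p ->
  [/\ p (rho mu p) = None, rho mu p \in X & (mu = rho mu p \/ anc p (rho mu p) mu)].
Proof.
move=> muX mumin C A; rewrite /rho; case E: (p mu) => [r|]; last by split => //; left.
split. exact: (@minroot X mu muX mumin p r C A E).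
  by have [] := closed_any C E.
by right; exact: anc1.
Qed.

Section Rec2.
Variables (X : {set V}) (mu : V).
Hypothesis muX : mu \in X.
Hypothesis mumin : forall v, v \in X -> (mu <= v)%N.

Definition comp p : {set V} := [set v | (v == rho mu p) || strict_anc p (rho mu p) v].
Definition restr p (Y : {set V}) : PF := [ffun v => if v \in Y then p v else None].
Definition comb (Y : {set V}) q1 q2 : PF := [ffun v => if v \in Y then q1 v else q2 v].

Definition Tri (t : ({set V} * PF) * PF) :=
  [&& t.1.1 \subset X, mu \in t.1.1, tree t.1.1 t.1.2 && avoid t.1.2 &
      forest (X :\: t.1.1) t.2 && avoid t.2].
Definition Fmap p : ({set V} * PF) * PF := (comp p, restr p (comp p), restr p (X :\: comp p)).
Definition Gmap (t : ({set V} * PF) * PF) : PF := comb t.1.1 t.1.2 t.2.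

Lemma restr_prune p Y w : restr p Y w = p w \/ restr p Y w = None.
Proof. by rewrite ffunE; case: ifP; [left|right]. Qed.

Lemma compP p : (forall v, reach p v) -> forall v,
  v \in comp p <-> (v = rho mu p \/ anc p (rho mu p) v).
Proof.
move=> R v; rewrite inE; split.
  by case/orP => [/eqP ->|/sa_anc]; [left|right].
by case=> [->|H]; rewrite ?eqxx // (anc_sa (R v) H) orbT.
Qed.

Lemma F_in p : forest X p -> avoid p -> Tri (Fmap p).
Proof.
case/forestP => [[C1 C2] R] /(avoidP R) A.
have [rN rX rmu] := rho_spec muX mumin (conj C1 C2) A.
set r := rho mu p in rN rX rmu.
have cP := compP R.
set Y := comp p in cP *.
have YX : Y \subset X.
  apply/subsetP => v /cP [->//|/anc_nonroot H].
  by apply/negPn/negP => vX; rewrite C1 in H.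
have muY : mu \in Y by apply/cP; case: rmu; [left|right].
rewrite /Tri /= YX muY /=.
apply/andP; split; apply/andP; split.
- apply/andP; split.
    apply: forestI; last by move=> v; apply: prune_reach (R v); exact: restr_prune.
    split=> [v vY|v u vY]; first by rewrite ffunE (negbTE vY).
    rewrite ffunE vY => E; apply/cP.
    case/cP: vY => [vr|H]; first by rewrite vr rN in E.
    case: (anc_parent H) => w; rewrite E => -[<-] [->|]; by [left|right].
  apply/card1P; exists r => v; rewrite [v \in roots _ _]inE [v \in pred1 _]inE /= ffunE.
  case: (boolP (v \in Y)) => vY /=.
    case/cP: (vY) => [->|H]; first by rewrite rN !eqxx.
    rewrite (negbTE (anc_nonroot H)).
    by apply/esym/eqP => vr; rewrite vr in H; exact: (no_cycle (R r) H).
  by apply/esym/eqP => vr; move: vY; rewrite vr; move/negP; apply; apply/cP; left.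
- by apply/(avoidP (fun v => prune_reach (restr_prune p Y) (R v))); apply: prune_avoid A; exact: restr_prune.
- apply: forestI; last by move=> v; apply: prune_reach (R v); exact: restr_prune.
  split=> [v vY|v u vY]; first by rewrite ffunE (negbTE vY).
  rewrite ffunE vY => E; move: vY; rewrite in_setD => /andP[vnY vX].
  have [uX _] := closed_any (conj C1 C2) E; rewrite in_setD uX andbT.
  apply/negP => uY; have H := proj1 (cP u) uY; move/negP: vnY; apply; apply/cP; right.
  case: H => [<-|H]; [exact: anc1|exact: anc_step E H].
- by apply/(avoidP (fun v => prune_reach (restr_prune p (X :\: Y)) (R v))); apply: prune_avoid A; exact: restr_prune.
Qed.

Section GFacts.
Variables (Y : {set V}) (q1 q2 : PF).
Hypothesis YX : Y \subset X.
Hypothesis muY : mu \in Y.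
Hypothesis T1 : tree Y q1.
Hypothesis A1 : avoid q1.
Hypothesis F2 : forest (X :\: Y) q2.
Hypothesis A2 : avoid q2.
Local Notation p := (comb Y q1 q2).

Lemma comb_closed1 : forall w u, w \in Y -> q1 w = Some u -> u \in Y.
Proof. by case/andP: T1 => /forestP [[_ C2] _] _. Qed.

Lemma comb_closed2 : forall w u, w \notin Y -> q2 w = Some u -> u \notin Y.
Proof.
case/forestP: F2 => [[D1 D2] _] w u wY E.
have [uX _] := closed_any (conj D1 D2) E; by move: uX; rewrite in_setD => /andP[].
Qed.

Lemma comb_ag1 : forall w, w \in Y -> p w = q1 w.
Proof. by move=> w wY; rewrite ffunE wY. Qed.

Lemma comb_ag2 : forall w, w \notin Y -> p w = q2 w.
Proof. by move=> w wY; rewrite ffunE (negbTE wY). Qed.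

Lemma comb_reach v : reach p v.
Proof.
case/andP: T1 => /forestP [_ R1] _; case/forestP: F2 => _ R2.
case: (boolP (v \in Y)) => vY.
  by apply/(agree_reach (A := fun w => w \in Y) comb_ag1 comb_closed1 vY).
by apply/(agree_reach (A := fun w => w \notin Y) comb_ag2 comb_closed2 vY).
Qed.

Lemma comb_anc1 a v : v \in Y -> anc p a v -> anc q1 a v /\ a \in Y.
Proof.
move=> vY H; have H1 := proj1 (agree_anc (A := fun w => w \in Y) a comb_ag1 comb_closed1 vY) H.
by split=> //; exact: (anc_closed (A := fun w => w \in Y) comb_closed1 vY H1).
Qed.

Lemma comb_anc2 a v : v \notin Y -> anc p a v -> anc q2 a v /\ a \notin Y.
Proof.
move=> vY H; have H1 := proj1 (agree_anc (A := fun w => w \notin Y) a comb_ag2 comb_closed2 vY) H.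
by split=> //; exact: (anc_closed (A := fun w => w \notin Y) comb_closed2 vY H1).
Qed.

Lemma G_in0 : forest X p && avoid p.
Proof.
case/andP: (T1) => /forestP [[C1 C2] R1] _; case/forestP: (F2) => [[D1 D2] R2].
move/(avoidP R1): A1 => A1'; move/(avoidP R2): A2 => A2'.
apply/andP; split.
  apply: forestI comb_reach; split.
    move=> v vX; have vY : v \notin Y by apply: contra vX; apply: (subsetP YX).
    by rewrite comb_ag2 // D1 // in_setD vY.
  move=> v u vX; case: (boolP (v \in Y)) => vY.
    by rewrite comb_ag1 // => E; apply: (subsetP YX); exact: C2 E.
  rewrite comb_ag2 // => E; have := D2 v u; rewrite !in_setD vY vX => /(_ isT E).
  by case/andP.
apply/(avoidP comb_reach) => a b c Hab Hbc.
case: (boolP (c \in Y)) => cY.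
  have [Hbc' bY] := comb_anc1 cY Hbc; have [Hab' _] := comb_anc1 bY Hab.
  exact: A1' Hab' Hbc'.
have [Hbc' bY] := comb_anc2 cY Hbc; have [Hab' _] := comb_anc2 bY Hab.
exact: A2' Hab' Hbc'.
Qed.

Lemma comp_comb : comp p = Y.
Proof.
case/andP: (T1) => /forestP [[C1 C2] R1] Hr.
move/(avoidP R1): A1 => A1'.
have mminY : forall v, v \in Y -> (mu <= v)%N by move=> v vY; apply: mumin; exact: (subsetP YX).
have rhoE : rho mu p = rho mu q1 by rewrite /rho comb_ag1.
have [rN rY rmu] := rho_spec muY mminY (conj C1 C2) A1'.
apply/setP => v; apply/idP/idP.
  move/(compP comb_reach); rewrite rhoE; case=> [->//|H].
  case: (boolP (v \in Y)) => // vY.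
  by have [_ /negP] := comb_anc2 vY H.
move=> vY; apply/(compP comb_reach); rewrite rhoE.
have [w Hw wN] := last_root (R1 v).
have wY : w \in Y by case: Hw => [->//|H]; exact: (anc_closed (A := fun w => w \in Y) C2 vY H).
have wr := roots_uniq Hr wY wN rY rN; subst w.
case: Hw => [<-|H]; first by left.
right; exact: (proj2 (agree_anc (A := fun w => w \in Y) _ comb_ag1 comb_closed1 vY) H).
Qed.

Lemma FG0 : Fmap p = (Y, q1, q2).
Proof.
case/andP: (T1) => /forestP [[C1 C2] R1] Hr; case/forestP: (F2) => [[D1 D2] R2].
rewrite /Fmap comp_comb; congr (_, _, _); apply/ffunP => v; rewrite !ffunE.
  by case: (boolP (v \in Y)) => vY //; rewrite C1.
case: (boolP (v \in Y)) => vY; first by rewrite in_setD vY /= D1 // in_setD vY.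
by case: ifP => // /negbT vXY; rewrite D1.
Qed.
End GFacts.

Lemma G_in t : Tri t -> forest X (Gmap t) && avoid (Gmap t).
Proof.
case: t => [[Y q1] q2]; case/and4P => /= YX muY /andP[T1 A1] /andP[F2 A2].
exact: G_in0.
Qed.

Lemma FG t : Tri t -> Fmap (Gmap t) = t.
Proof.
case: t => [[Y q1] q2]; case/and4P => /= YX muY /andP[T1 A1] /andP[F2 A2].
exact: FG0.
Qed.

Lemma GF p : forest X p -> Gmap (Fmap p) = p.
Proof.
case/forestP => [[C1 C2] R]; apply/ffunP => v; rewrite /Gmap /Fmap /= !ffunE.
case: (boolP (v \in comp p)) => vY //; rewrite in_setD vY /=.
by case: (boolP (v \in X)) => // vX; rewrite C1.
Qed.

Lemma rec2 : Fcnt X =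
  (\sum_(Y : {set V} | (Y \subset X) && (mu \in Y)) Tcnt Y * Fcnt (X :\: Y))%N.
Proof.
have -> : Fcnt X = #|[pred t : ({set V} * PF) * PF | Tri t]|.
  apply: (@card_bij _ _ _ _ Fmap Gmap).
  - by move=> p; rewrite !inE => /andP[F Av]; exact: F_in.
  - by move=> t; rewrite !inE => H; exact: G_in.
  - by move=> p; rewrite !inE => /andP[F Av]; exact: GF.
  - by move=> t; rewrite !inE => H; exact: FG.
rewrite -sum1_card.
have -> : (\sum_(Y : {set V} | (Y \subset X) && (mu \in Y)) Tcnt Y * Fcnt (X :\: Y) =
  \sum_(Y : {set V} | (Y \subset X) && (mu \in Y))
    \sum_(q1 : PF | tree Y q1 && avoid q1) \sum_(q2 : PF | forest (X :\: Y) q2 && avoid q2) 1)%N.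
  apply: eq_bigr => Y _; rewrite /Tcnt /Fcnt -!sum1_card big_distrl /=.
  apply: eq_bigr => q1 _; rewrite mul1n; done.
rewrite pair_big_dep pair_big_dep /=.
apply: eq_bigl => -[[Y q1] q2]; rewrite inE /Tri /=.
by rewrite !andbA.
Qed.
End Rec2.

Lemma Tcnt0 X : X = set0 -> Tcnt X = 0%N.
Proof.
move=> ->; apply: eq_card0 => p; rewrite !inE.
suff H : #|roots set0 p| = 0%N by rewrite /tree H andbF.
by apply: eq_card0 => v; rewrite inE in_set0.
Qed.

Lemma Fcnt0 X : X = set0 -> Fcnt X = 1%N.
Proof.
move=> ->; apply/eqP/card1P; exists [ffun => None] => p; rewrite !inE.
apply/idP/idP.
  case/andP => /forestP [[C1 _] _] _; apply/eqP/ffunP => v; rewrite ffunE C1 //.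
  by rewrite in_set0.
move/eqP => ->.
have R : forall v, reach [ffun => None] v by move=> v; exists 1%N; rewrite /= ffunE.
apply/andP; split.
  by apply: forestI R; split=> [v _|v u]; rewrite ffunE.
by apply/(avoidP R) => a b c /anc_nonroot; rewrite ffunE.
Qed.

Lemma contains3 p (a b c : V) (pi : seq nat) : size pi = 3%N ->
  strict_anc p a b -> strict_anc p b c ->
  (forall i j : 'I_3, (nth a [:: a; b; c] i < nth a [:: a; b; c] j)%N = (nth 0%N pi i < nth 0%N pi j)%N) ->
  contains p pi.
Proof.
case: pi => [|x [|y [|z [|]]]] // _ Hab Hbc H.
apply/existsP; exists [tuple a; b; c]; apply/andP; split.
  by rewrite [sorted _ _]/= Hab Hbc.
apply/forallP => i; apply/forallP => j; apply/eqP.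
by rewrite !(tnth_nth a) H.
Qed.

Lemma not_contains p pi : avoidp p -> size pi = 3%N ->
  ((nth 0%N pi 1 < nth 0%N pi 0) || (nth 0%N pi 2 < nth 0%N pi 0))%N -> ~~ contains p pi.
Proof.
move=> A; case: pi => [|x [|y [|z [|]]]] // _ Hp.
apply/existsP => -[s /andP[Hs /forallP H]].
have E10 := eqP (forallP (H (@Ordinal 3 1 isT)) (@Ordinal 3 0 isT)).
have E20 := eqP (forallP (H (@Ordinal 3 2 isT)) (@Ordinal 3 0 isT)).
clear H; move: Hs E10 E20.
case: s => l sz.
case: l sz => [|a [|b [|c [|]]]] // sz.
rewrite !(tnth_nth a) -[sorted _ _]/(strict_anc p a b && (strict_anc p b c && true)).
move=> /andP[/sa_anc Hab /andP[/sa_anc Hbc _]].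
have [h1 h2] := A _ _ _ Hab Hbc.
change ((b < a)%N = (y < x)%N -> (c < a)%N = (z < x)%N -> False).
have Hp' : ((y < x) || (z < x))%N := Hp.
case/orP: Hp' => hp; rewrite hp.
  by move=> H; have := ltn_trans h1 H; rewrite ltnn.
by move=> _ H; have := ltn_trans h2 H; rewrite ltnn.
Qed.

Lemma avoidsE p : (forall v, reach p v) -> avoids p S5p12 = avoid p.
Proof.
move=> R.
have -> : avoids p S5p12 = [&& ~~ contains p [:: 2; 1; 3]%N, ~~ contains p [:: 2; 3; 1]%N,
   ~~ contains p [:: 3; 1; 2]%N & (~~ contains p [:: 3; 2; 1]%N && true)] by [].
apply/idP/idP; last first.
  move/(avoidP R) => A.
  by rewrite !not_contains.
move=> H; apply/(avoidP R) => a b c Hab Hbc.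
have sab := anc_sa (R b) Hab; have sbc := anc_sa (R c) Hbc.
have nab : a != b by apply/eqP => E; rewrite E in Hab; exact: (no_cycle (R b) Hab).
have nbc : b != c by apply/eqP => E; rewrite E in Hbc; exact: (no_cycle (R c) Hbc).
have nac : a != c.
  apply/eqP => E; rewrite E in Hab; exact: (no_cycle (R c) (anc_trans Hab Hbc)).
move: nab nbc nac; rewrite -!val_eqE /= => nab nbc nac.
case: (ltngtP a b) => [lab|lba|eab]; last by rewrite eab eqxx in nab.
  case: (ltngtP a c) => [lac|lca|eac]; [by []| |by rewrite eac eqxx in nac].
  move: H; rewrite (@contains3 p a b c [:: 2; 3; 1]%N) ?andFb ?andbF //.
  by move=> [[|[|[|i]]] Hi] [[|[|[|j]]] Hj] //=; lia.
case: (ltngtP b c) => [lbc|lcb|ebc]; last by rewrite ebc eqxx in nbc.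
  case: (ltngtP a c) => [lac|lca|eac]; last by rewrite eac eqxx in nac.
    move: H; rewrite (@contains3 p a b c [:: 2; 1; 3]%N) ?andFb ?andbF //.
    by move=> [[|[|[|i]]] Hi] [[|[|[|j]]] Hj] //=; lia.
  move: H; rewrite (@contains3 p a b c [:: 3; 1; 2]%N) ?andFb ?andbF //.
  by move=> [[|[|[|i]]] Hi] [[|[|[|j]]] Hj] //=; lia.
move: H; rewrite (@contains3 p a b c [:: 3; 2; 1]%N) ?andFb ?andbF //.
by move=> [[|[|[|i]]] Hi] [[|[|[|j]]] Hj] //=; lia.
Qed.

Lemma treeT_rooted p : is_rooted_tree p = tree [set: V] p.
Proof.
rewrite /is_rooted_tree /tree /forest.
have -> : closedb [set: V] p.
  by apply/forallP => v; rewrite in_setT; case: (p v) => // u; rewrite in_setT.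
have -> : #|roots [set: V] p| = #|[pred x | p x == None]|.
  by apply: eq_card => v; rewrite !inE.
by rewrite andbC.
Qed.

Lemma tcount_Tcnt : tcount S5p12 N = Tcnt [set: V].
Proof.
apply: eq_card => p; rewrite !inE treeT_rooted.
case T: (tree [set: V] p) => //=.
by case/andP: T => /forestP [_ R] _; exact: (avoidsE R).
Qed.
End Comb.

Lemma sum_subsets (T : finType) (A : {set T}) (H : nat -> nat) :
  (\sum_(Z : {set T} | Z \subset A) H #|Z| = \sum_(k < #|A|.+1) 'C(#|A|, k) * H k)%N.
Proof.
rewrite (partition_big (fun Z : {set T} => (inord #|Z| : 'I_#|A|.+1)) xpredT) //=.
apply: eq_bigr => k _.
rewrite (eq_bigr (fun _ => H k)); last first.
  move=> Z /andP[ZA /eqP <-]; rewrite inordK // ltnS; exact: subset_leq_card.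
rewrite sum_nat_const -cards_draws; congr muln; apply: eq_card => Z; rewrite !inE.
rewrite unfold_in /=; case ZA: (Z \subset A) => //=.
by rewrite -val_eqE /= inordK // ltnS; exact: subset_leq_card.
Qed.

Lemma sum_subsets_mu (T : finType) (X : {set T}) (mu : T) (G : nat -> nat) : mu \in X ->
  (\sum_(Y : {set T} | (Y \subset X) && (mu \in Y)) G #|Y| =
   \sum_(k < #|X|) 'C(#|X|.-1, k) * G k.+1)%N.
Proof.
move=> muX.
rewrite (reindex_onto (fun Z => mu |: Z) (fun Y => Y :\ mu)); last first.
  by move=> Y /andP[_ muY]; rewrite setD1K.
have HX : #|X| = (#|X :\ mu|).+1 by rewrite (cardsD1 mu X) muX.
rewrite HX /= -(sum_subsets (X :\ mu) (fun k => G k.+1)).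
apply: eq_big => Z.
  rewrite subUset sub1set muX /= setU11 andbT subsetD1.
  have -> : (mu |: Z) :\ mu = Z :\ mu by apply/setP => v; rewrite !inE; case: (v == mu).
  case: (boolP (mu \in Z)) => muZ.
    rewrite andbF; apply/negbTE; apply/negP => /andP[_ /eqP E]; move: muZ; rewrite -E !inE eqxx //.
  have -> : Z :\ mu = Z by apply/setP => v; rewrite !inE; case: eqP => // ->; rewrite (negbTE muZ).
  by rewrite eqxx andbT.
move=> /andP[_ /eqP E]; have muZ : mu \notin Z by rewrite -E !inE eqxx.
by rewrite cardsU1 muZ.
Qed.

Definition tau m := @Tcnt m [set: 'I_m].
Definition phi m := @Fcnt m [set: 'I_m].

Lemma has_min N (X : {set 'I_N}) : X != set0 ->
  exists mu, mu \in X /\ forall v, v \in X -> (mu <= v)%N.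
Proof.
case/set0Pn => x0 Hx0; exists [arg min_(i < x0 in X) (i : nat)].
by case: arg_minnP => // i iX Hi; split.
Qed.

Definition Q s := forall N (X : {set 'I_N}), #|X| = s -> Tcnt X = tau s /\ Fcnt X = phi s.

Lemma cardT' m : #|[set: 'I_m]| = m.
Proof. by rewrite cardsT card_ord. Qed.

Lemma T_formula m N (X : {set 'I_N}) : Q m -> #|X| = m.+1 -> Tcnt X = (phi m + tau m)%N.
Proof.
move=> Qm HX.
have [mu [muX mumin]] : exists mu, mu \in X /\ forall v, v \in X -> (mu <= v)%N.
  by apply: has_min; rewrite -card_gt0 HX.
rewrite (rec1 muX mumin).
have HX' : #|X :\ mu| = m by move: HX; rewrite (cardsD1 mu X) muX; case.
by have [-> ->] := Qm _ _ HX'.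
Qed.

Lemma F_formula s N (X : {set 'I_N}) : (forall s', (s' < s)%N -> Q s') ->
  (forall N' (Z : {set 'I_N'}), #|Z| = s -> Tcnt Z = tau s) -> #|X| = s -> (0 < s)%N ->
  Fcnt X = (\sum_(k < s) 'C(s.-1, k) * (tau k.+1 * phi (s - k.+1)))%N.
Proof.
move=> IH Ts HX s0.
have [mu [muX mumin]] : exists mu, mu \in X /\ forall v, v \in X -> (mu <= v)%N.
  by apply: has_min; rewrite -card_gt0 HX.
rewrite (rec2 muX mumin) -HX -(sum_subsets_mu (fun y => tau y * phi (#|X| - y))%N muX).
apply: eq_bigr => Y /andP[YX muY].
have YleX : (#|Y| <= #|X|)%N by exact: subset_leq_card.
have Y0 : (0 < #|Y|)%N by rewrite card_gt0; apply/set0Pn; exists mu.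
have HXY : #|X :\: Y| = (#|X| - #|Y|)%N by rewrite cardsD (setIidPr YX).
congr muln.
  case: (ltngtP #|Y| s) => [lt|gt|eq].
  - by have [] := IH _ lt _ Y erefl.
  - by rewrite -HX in gt; move: gt; rewrite ltnNge YleX.
  - by rewrite eq; apply: Ts.
have lt : (#|X| - #|Y| < s)%N by rewrite -HX; lia.
by have [] := IH _ lt _ _ HXY.
Qed.

Lemma Qall s : Q s.
Proof.
elim/ltn_ind: s => -[|m] IH N X HX.
  have -> : X = set0 by apply: cards0_eq.
  have E : [set: 'I_0] = set0 by apply: cards0_eq; rewrite cardT'.
  by rewrite /tau /phi E !Tcnt0 ?Fcnt0.
have Ts : forall N' (Z : {set 'I_N'}), #|Z| = m.+1 -> Tcnt Z = tau m.+1.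
  move=> N' Z HZ; rewrite /tau (T_formula (IH m (ltnSn m)) HZ).
  by rewrite (T_formula (IH m (ltnSn m)) (cardT' m.+1)).
split; first exact: Ts.
by rewrite /phi (F_formula IH Ts HX) // (F_formula IH Ts (cardT' m.+1)).
Qed.

Lemma tau0 : tau 0 = 0%N.
Proof. by rewrite /tau Tcnt0 //; apply: cards0_eq; rewrite cardT'. Qed.

Lemma phi0 : phi 0 = 1%N.
Proof. by rewrite /phi Fcnt0 //; apply: cards0_eq; rewrite cardT'. Qed.

Lemma tauS n : tau n.+1 = (tau n + phi n)%N.
Proof. by rewrite {1}/tau (T_formula (@Qall n) (cardT' n.+1)) addnC. Qed.

Lemma phiS n : phi n.+1 = (\sum_(k < n.+1) 'C(n, k) * tau k.+1 * phi (n - k))%N.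
Proof.
have Ts : forall N' (Z : {set 'I_N'}), #|Z| = n.+1 -> Tcnt Z = tau n.+1.
  by move=> N1 Z HZ; have [] := @Qall n.+1 N1 Z HZ.
rewrite {1}/phi (F_formula (fun s _ => @Qall s) Ts (cardT' n.+1)) //.
by apply: eq_bigr => k _; rewrite mulnA subSS.
Qed.

Lemma tcount_tau n : tcount S5p12 n = tau n.
Proof. exact: tcount_Tcnt. Qed.

From mathcomp Require Import ring.
Import GRing.Theory Num.Theory.
Local Open Scope ring_scope.
Section FPS.
Variable a : fps.
Hypothesis a0 : a 0%N = 0.

Lemma fps_powS k : fps_pow a k.+1 = fps_mul a (fps_pow a k).
Proof. by []. Qed.

Lemma pow_low k n : (n < k)%N -> fps_pow a k n = 0.
Proof.
elim: k n => [//|k IH] n ltnk.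
rewrite fps_powS /fps_mul big1 // => [[i Hi]] _ /=.
case: i Hi => [|i] Hi; first by rewrite a0 mul0r.
by rewrite IH ?mulr0 //; lia.
Qed.

Definition PP (N : nat) : {poly rat} := \poly_(i < N) a i.

Lemma pow_poly N k n : (n < N)%N -> fps_pow a k n = ((PP N) ^+ k)`_n.
Proof.
elim: k n => [|k IH] n ltnN.
  by rewrite expr0 coef1; case: n ltnN.
rewrite fps_powS exprS coefM /fps_mul; apply: eq_bigr => [[i Hi]] _ /=.
by rewrite coef_poly IH; [rewrite (@leq_ltn_trans n) //| lia].
Qed.

Definition QQ (M N : nat) : {poly rat} :=
  \sum_(k < M) ((k`!)%:R)^-1 *: (PP N ^+ k).

Lemma exp_QQ M N n : (n < M)%N -> (n < N)%N -> fps_exp a n = (QQ M N)`_n.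
Proof.
move=> nM nN; rewrite /fps_exp /QQ coef_sum.
have -> : \sum_(k < M) (((k`!)%:R)^-1 *: PP N ^+ k)`_n =
          \sum_(k < M) fps_pow a k n / (k`!)%:R.
  by apply: eq_bigr => k _; rewrite coefZ -pow_poly // mulrC.
rewrite -(big_mkord xpredT (fun k => fps_pow a k n / (k`!)%:R)).
rewrite -(big_mkord xpredT (fun k => fps_pow a k n / (k`!)%:R)).
rewrite [in RHS](big_cat_nat (n := n.+1)) //= [X in _ + X]big1_seq ?addr0 //.
move=> k /andP[_]; rewrite mem_index_iota => /andP[Hk _].
by rewrite pow_low ?mul0r.
Qed.

Lemma deriv_QQ m N : (QQ m.+1 N)^`() = (PP N)^`() * QQ m N.
Proof.
rewrite /QQ big_ord_recl /= expr0.
rewrite derivD alg_polyC derivC add0r.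
rewrite raddf_sum mulr_sumr; apply: eq_bigr => i _.
rewrite /bump /= add1n derivZ deriv_exp /= -scalerAr -scaler_nat scalerA.
congr (_ *: _).
rewrite factS natrM invfM mulrC mulrA mulfV ?mul1r //.
by rewrite pnatr_eq0.
Qed.

Lemma exp_deriv n :
  fps_deriv (fps_exp a) n = fps_mul (fps_deriv a) (fps_exp a) n.
Proof.
rewrite /fps_deriv (@exp_QQ n.+2 n.+2 n.+1) //.
rewrite mulr_natl -coef_deriv deriv_QQ coefM.
rewrite /fps_mul; apply: eq_bigr => [[i Hi]] _ /=.
rewrite coef_deriv coef_poly (@exp_QQ n.+1 n.+2 (n - i)); last 2 first.
- lia.
- lia.
by rewrite ifT ?mulr_natl //; lia.
Qed.
End FPS.
Lemma fact_neq0 (n : nat) : (n`!)%:R != 0 :> rat.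
Proof. by rewrite pnatr_eq0 -lt0n fact_gt0. Qed.

Lemma final_step (t f : nat -> nat) :
  t 0%N = 0%N -> f 0%N = 1%N -> (forall n, t n.+1 = (t n + f n)%N) ->
  (forall n, f n.+1 = \sum_(k < n.+1) 'C(n, k) * t k.+1 * f (n - k))%N ->
  let T := egf t in
  T 0%N = 0 /\ (forall n : nat, fps_deriv T n = T n + fps_exp T n).
Proof.
move=> t0 f0 tS fS T.
have T0 : T 0%N = 0 by rewrite /T /egf t0 mul0r.
have E : forall n, fps_exp T n = (f n)%:R / (n`!)%:R.
  elim/ltn_ind => -[|n] IH.
    rewrite /fps_exp big_ord1 /= f0 /fps_pow /=.
    by rewrite /fps_one !divr1.
  have H := @exp_deriv T T0 n; rewrite /fps_deriv /fps_mul in H.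
  have Hs : \sum_(i < n.+1) i.+1%:R * T i.+1 * fps_exp T (n - i)%N =
            (f n.+1)%:R / (n`!)%:R.
    rewrite fS natr_sum mulr_suml; apply: eq_bigr => [[i Hi]] _ /=.
    rewrite IH; last by lia.
    have hb : ('C(n, i)%:R * ((i`!)%:R * ((n - i)`!)%:R)) = (n`!)%:R :> rat.
      by rewrite -!natrM bin_fact.
    have c0 : 'C(n, i)%:R != 0 :> rat by rewrite pnatr_eq0 -lt0n bin_gt0.
    rewrite -hb /T /egf factS natrM [in RHS]natrM [in RHS]natrM.
    have := fact_neq0 i; have := fact_neq0 (n - i).
    move=> h1 h2.
    have h3 : i.+1%:R != 0 :> rat by rewrite pnatr_eq0.
    field; by rewrite h1 h2 c0 nat1r h3.
  move: H; rewrite Hs factS natrM => H.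
  have h3 : n.+1%:R != 0 :> rat by rewrite pnatr_eq0.
  have h2 := fact_neq0 n.
  apply: (mulfI h3); rewrite H; field; by rewrite h2 nat1r h3.
split => // n.
rewrite /fps_deriv E /T /egf tS factS natrM natrD.
have h3 : n.+1%:R != 0 :> rat by rewrite pnatr_eq0.
have h2 := fact_neq0 n.
field; by rewrite h2 nat1r h3.
Qed.

Theorem proposition5p12 :
  let T := egf (tcount S5p12) in
  T 0%N = 0 /\ (forall n : nat, fps_deriv T n = T n + fps_exp T n).
Proof.
apply: (@final_step (tcount S5p12) phi).
- by rewrite tcount_tau tau0.
- exact: phi0.
- by move=> n; rewrite !tcount_tau tauS.
- by move=> n; rewrite phiS; apply: eq_bigr => k _; rewrite tcount_tau.
Qed.
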